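(* Let $\kappa$ be a regular uncountable cardinal. Then (a) the quotient Boolean algebra $\mathcal P(\kappa)/[\kappa]^{<\kappa}$ does not have the $\kappa$-FN, and (b) the power set algebra $\mathcal P(\kappa)$ does not have the $\kappa$-FN.
   Context: For an infinite cardinal $\kappa$, a Boolean algebra $B$ has the $\kappa$-Freese–Nation property ($\kappa$-FN) if there is a map $f:B\to[B]^{<\kappa}$ such that for all $a,b\in B$ with $a\le b$ there is $c\in f(a)\cap f(b)$ with $a\le c\le b$. $[\kappa]^{<\kappa}$ denotes the ideal of subsets of $\kappa$ of cardinality $<\kappa$. *)

(* Defs.v *)
(* plain Prop-valued set theory.
   An infinite cardinal kappa is represented by a type K of cardinality kappa
   (e.g. the set of ordinals below kappa). Subsets of a type A are predicates
   A -> Prop. *)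

Definition injective {A B : Type} (g : A -> B) : Prop :=
  forall x y, g x = g y -> x = y.

(* X has cardinality < |K| (X in [A]^{<kappa}): there is no injection of K into X. *)
Definition small (K : Type) {A : Type} (X : A -> Prop) : Prop :=
  ~ exists g : K -> A, injective g /\ forall k, X (g k).

Definition uncountable (K : Type) : Prop :=
  ~ exists g : K -> nat, injective g.

Definition regular (K : Type) : Prop :=
  forall (I : Type) (F : I -> K -> Prop),
    small K (fun _ : I => True) ->
    (forall i, small K (F i)) ->
    small K (fun k => exists i, F i k).

Definition kFN (K : Type) (B : Type) (le : B -> B -> Prop) : Prop :=
  exists f : B -> (B -> Prop),
    (forall b, small K (f b)) /\
    forall a b, le a b ->
      exists c, f a c /\ f b c /\ le a c /\ le c b.

Definition Pow (K : Type) : Type := K -> Prop.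
Definition Pow_le {K : Type} (a b : Pow K) : Prop := forall k, a k -> b k.

Definition setdiff {K : Type} (a b : Pow K) : Pow K := fun k => a k /\ ~ b k.
Definition eq_mod {K : Type} (a b : Pow K) : Prop :=
  small K (setdiff a b) /\ small K (setdiff b a).

Definition PowMod (K : Type) : Type :=
  { C : Pow K -> Prop | exists a : Pow K, forall b, C b <-> eq_mod a b }.

Definition PowMod_le {K : Type} (C D : PowMod K) : Prop :=
  exists a b, proj1_sig C a /\ proj1_sig D b /\ small K (setdiff a b).

(* Main.v *)
Require Import Defs.
From mathcomp Require ssreflect ssrbool eqtype boolp wochoice.
Module WO.
Import ssreflect ssrbool eqtype boolp wochoice.
Lemma wo_exists (K : Type) : exists le : K -> K -> Prop,
  (forall A : K -> Prop, (exists x, A x) -> exists z, A z /\ forall x, A x -> le z x) /\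
  (forall x y, le x y -> le y x -> x = y).
Proof.
have [R HR] := well_ordering_principle {classic K}.
have refl : forall x, R x x.
  move=> x.
  have ne : nonempty [pred z : {classic K} | `[< z = x >]].
    by exists x; rewrite inE; apply/asboolP.
  have [z [[Hz Hm] _]] := HR _ ne.
  move: Hz; rewrite inE => /asboolP Hz; subst z.
  by apply: Hm; rewrite inE; apply/asboolP.
exists (fun x y => R x y = true); split.
  move=> A [x Ax].
  have ne : nonempty [pred y : {classic K} | `[< A y >]].
    by exists x; rewrite inE; apply/asboolP.
  have [z [[Hz Hmin] _]] := HR _ ne.
  exists z; split; first by move: Hz; rewrite inE => /asboolP.
  by move=> y Ay; apply: Hmin; rewrite inE; apply/asboolP.
move=> x y Hxy Hyx.
have ne : nonempty [pred z : {classic K} | `[< z = x \/ z = y >]].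
  by exists x; rewrite inE; apply/asboolP; left.
have [z [_ Hu]] := HR _ ne.
have mx : minimum_of R [pred z : {classic K} | `[< z = x \/ z = y >]] x.
  split; first by rewrite inE; apply/asboolP; left.
  by move=> w; rewrite inE => /asboolP [->|->].
have my : minimum_of R [pred z : {classic K} | `[< z = x \/ z = y >]] y.
  split; first by rewrite inE; apply/asboolP; right.
  by move=> w; rewrite inE => /asboolP [->|->].
by rewrite -(Hu _ mx) -(Hu _ my).
Qed.
End WO.
From Stdlib Require Import Classical ClassicalEpsilon FunctionalExtensionality.

Definition sub {A : Type} (X Y : A -> Prop) := forall x, X x -> Y x.

Lemma small_sub (K A : Type) (X Y : A -> Prop) : sub X Y -> small K Y -> small K X.
Proof. intros HXY HY [g [Hg Hk]]. apply HY. exists g. split; auto. Qed.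

Lemma not_small_ex (K A : Type) (X : A -> Prop) : ~ small K X ->
  exists g : K -> A, injective g /\ forall k, X (g k).
Proof. intros H. apply NNPP. exact H. Qed.

Lemma small_image (K A B : Type) (X : A -> Prop) (h : A -> B) :
  small K X -> small K (fun y => exists x, X x /\ y = h x).
Proof.
  intros HX [g [Hg Hk]]. apply HX.
  exists (fun k => proj1_sig (constructive_indefinite_description _ (Hk k))).
  split.
  - intros k1 k2 E. apply Hg.
    destruct (proj2_sig (constructive_indefinite_description _ (Hk k1))) as [_ E1].
    destruct (proj2_sig (constructive_indefinite_description _ (Hk k2))) as [_ E2].
    rewrite E1, E2, E. reflexivity.
  - intros k. exact (proj1 (proj2_sig (constructive_indefinite_description _ (Hk k)))).
Qed.

Lemma notsmall_K (K : Type) : ~ small K (fun _ : K => True).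
Proof. intros H. apply H. exists (fun k => k). split; [intros x y E; exact E | auto]. Qed.

Lemma small_bool (K : Type) : uncountable K -> small K (fun _ : bool => True).
Proof.
  intros Hu [g [Hg _]]. apply Hu.
  exists (fun k => if g k then 0 else 1). intros x y E. apply Hg.
  destruct (g x), (g y); simpl in E; congruence.
Qed.

Lemma small_nat (K : Type) : uncountable K -> small K (fun _ : nat => True).
Proof. intros Hu [g [Hg _]]. apply Hu. exists g. exact Hg. Qed.

Lemma K_inh (K : Type) : uncountable K -> exists k : K, True.
Proof.
  intros Hu. apply NNPP. intros N. apply Hu. exists (fun _ => 0).
  intros x y _. exfalso. apply N. exists x. auto.
Qed.

Lemma small_empty (K A : Type) : uncountable K -> small K (fun _ : A => False).
Proof. intros Hu [g [_ Hk]]. destruct (K_inh K Hu) as [k _]. exact (Hk k). Qed.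

Lemma small_sing (K A : Type) (a : A) : uncountable K -> small K (fun y => y = a).
Proof.
  intros Hu [g [Hg Hk]]. apply Hu. exists (fun _ => 0). intros x y _.
  apply Hg. rewrite (Hk x), (Hk y). reflexivity.
Qed.

Lemma small_sig (K A : Type) (X : A -> Prop) : small K X -> small K (fun _ : sig X => True).
Proof.
  intros HX [g [Hg _]]. apply HX. exists (fun k => proj1_sig (g k)). split.
  - intros x y E. apply Hg. destruct (g x) as [a Ha], (g y) as [b Hb]. simpl in E.
    subst. f_equal. apply proof_irrelevance.
  - intros k. exact (proj2_sig (g k)).
Qed.

Lemma reg_gen (K A I : Type) (F : I -> A -> Prop) :
  regular K -> small K (fun _ : I => True) -> (forall i, small K (F i)) ->
  small K (fun a => exists i, F i a).
Proof.
  intros Hr HI HF [g [Hg Hk]].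
  set (io := fun k => proj1_sig (constructive_indefinite_description _ (Hk k))).
  assert (Hio : forall k, F (io k) (g k)).
  { intros k. exact (proj2_sig (constructive_indefinite_description _ (Hk k))). }
  apply (notsmall_K K).
  eapply small_sub; [|apply (Hr I (fun i k => io k = i) HI)].
  - intros k _. exists (io k). reflexivity.
  - intros i [h [Hh Hhk]]. apply (HF i). exists (fun k => g (h k)). split.
    + intros x y E. apply Hh. apply Hg. exact E.
    + intros k. rewrite <- (Hhk k). apply Hio.
Qed.

Lemma reg_sub (K A B : Type) (X : A -> Prop) (F : A -> B -> Prop) :
  regular K -> small K X -> (forall i, X i -> small K (F i)) ->
  small K (fun k => exists i, X i /\ F i k).
Proof.
  intros Hr HX HF.
  pose proof (reg_gen K B (sig X) (fun i => F (proj1_sig i)) Hr (small_sig K A X HX)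
     (fun i => HF (proj1_sig i) (proj2_sig i))) as H.
  eapply small_sub; [|exact H]. intros k [i [Hi Fi]]. exists (exist _ i Hi). exact Fi.
Qed.

Lemma small_union (K A : Type) (X Y : A -> Prop) : uncountable K -> regular K ->
  small K X -> small K Y -> small K (fun k => X k \/ Y k).
Proof.
  intros Hu Hr HX HY.
  pose proof (reg_gen K A bool (fun b => if b then X else Y) Hr (small_bool K Hu)
    (fun b => if b as b0 return small K (if b0 then X else Y) then HX else HY)) as H.
  eapply small_sub; [|exact H]. intros k [Hk|Hk]; [exists true|exists false]; exact Hk.
Qed.

Definition SO (K : Type) (lt : K -> K -> Prop) :=
  (forall x y, x = y \/ lt x y \/ lt y x) /\ (forall x, ~ lt x x) /\
  (forall x y z, lt x y -> lt y z -> lt x z) /\ well_founded lt.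

Lemma SO_exists (K : Type) : exists lt : K -> K -> Prop, SO K lt.
Proof.
  destruct (WO.wo_exists K) as [le [Hmin Hanti]].
  assert (refl : forall x, le x x).
  { intros x. destruct (Hmin (fun z => z = x)) as [z [Hz Hm]]; [exists x; auto|].
    subst z. apply Hm. reflexivity. }
  assert (tot : forall x y, le x y \/ le y x).
  { intros x y. destruct (Hmin (fun z => z = x \/ z = y)) as [z [Hz Hm]]; [exists x; auto|].
    destruct Hz; subst z; [left|right]; apply Hm; auto. }
  assert (trans : forall x y z, le x y -> le y z -> le x z).
  { intros x y z H1 H2.
    destruct (Hmin (fun w => w = x \/ w = y \/ w = z)) as [m [Hm Hmm]]; [exists x; auto|].
    destruct Hm as [E|[E|E]]; subst m.
    - apply Hmm. auto.
    - assert (x = y) by (apply Hanti; auto). subst. auto.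
    - assert (y = z) by (apply Hanti; auto). subst. auto. }
  exists (fun x y => le x y /\ x <> y). split; [|split; [|split]].
  - intros x y. destruct (classic (x = y)) as [E|N]; [left; auto|right].
    destruct (tot x y); [left|right]; split; auto.
  - intros x [_ N]. apply N. reflexivity.
  - intros x y z [H1 N1] [H2 N2]. split; [eapply trans; eauto|].
    intros E. subst z. apply N1. apply Hanti; auto.
  - intros x. apply NNPP. intros N.
    destruct (Hmin (fun z => ~ Acc (fun x y => le x y /\ x <> y) z)) as [m [Hm Hmm]];
      [exists x; auto|].
    apply Hm. constructor. intros y [Hy Ny]. apply NNPP. intros Ay.
    apply Ny. apply Hanti; auto.
Qed.

Lemma wf_min (K : Type) (lt : K -> K -> Prop) : well_founded lt ->
  forall A : K -> Prop, (exists x, A x) -> exists m, A m /\ forall y, A y -> ~ lt y m.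
Proof.
  intros wf A [x Ax]. apply NNPP. intros N.
  revert Ax. induction (wf x) as [x _ IH]. intros Ax.
  apply N. exists x. split; auto. intros y Ay Hy. exact (IH y Hy Ay).
Qed.

Lemma getP (K : Type) (lt : K -> K -> Prop) (Q : K -> Prop) : SO K lt -> ~ small K Q ->
  exists P : K -> Prop, sub P Q /\ ~ small K P /\
    forall a, P a -> small K (fun g => P g /\ lt g a).
Proof.
  intros [tri [irr [tr wf]]] HQ.
  destruct (classic (exists z, Q z /\ ~ small K (fun x => Q x /\ lt x z))) as [E|N].
  - destruct (wf_min K lt wf _ E) as [m [[Qm Hm] Hmin]].
    exists (fun x => Q x /\ lt x m). split; [intros x [H _]; exact H|split; [exact Hm|]].
    intros a [Qa La]. apply small_sub with (Y := fun x => Q x /\ lt x a).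
    + intros g [[Qg _] Lg]. auto.
    + apply NNPP. intros Ns. exact (Hmin a (conj Qa Ns) La).
  - exists Q. split; [intros x H; exact H|split; [exact HQ|]].
    intros a Qa. apply NNPP. intros Ns. apply N. exists a. auto.
Qed.

Lemma bound (K : Type) (lt : K -> K -> Prop) (P : K -> Prop) :
  uncountable K -> regular K -> SO K lt -> ~ small K P ->
  (forall a, P a -> small K (fun g => P g /\ lt g a)) ->
  forall X : K -> Prop, small K X -> exists a, P a /\ forall x, X x -> P x -> lt x a.
Proof.
  intros Hu Hr [tri [irr [tr wf]]] HP Hinit X HX.
  set (Y := fun k => exists i, (X i /\ P i) /\ ((P k /\ lt k i) \/ k = i)).
  assert (HY : small K Y).
  { apply reg_sub; auto.
    - eapply small_sub; [|exact HX]. intros x [H _]; exact H.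
    - intros i [_ Pi]. apply small_union; auto. apply small_sing; auto. }
  assert (Ex : exists a, P a /\ ~ Y a).
  { apply NNPP. intros N. apply HP. eapply small_sub; [|exact HY].
    intros a Pa. apply NNPP. intros Ya. apply N. exists a. auto. }
  destruct Ex as [a [Pa Ya]]. exists a. split; auto.
  intros x Xx Px. destruct (tri x a) as [E|[L|L]].
  - exfalso. apply Ya. exists x. split; auto.
  - exact L.
  - exfalso. apply Ya. exists x. split; auto.
Qed.

Lemma trec (K X : Type) (lt : K -> K -> Prop) (x0 : X) (wf : well_founded lt)
  (Good : K -> (K -> X) -> X -> Prop) :
  (forall a h h' x, (forall g, lt g a -> h g = h' g) -> Good a h x -> Good a h' x) ->
  (forall a h, exists x, Good a h x) -> exists F : K -> X, forall a, Good a F (F a).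
Proof.
  intros Hcomp Hex.
  set (ext := fun a (r : forall g, lt g a -> X) (g : K) =>
    match excluded_middle_informative (lt g a) with
    | left H => r g H | right _ => x0 end).
  set (step := fun a (r : forall g, lt g a -> X) =>
    proj1_sig (constructive_indefinite_description _ (Hex a (ext a r)))).
  set (F := Fix wf (fun _ => X) step).
  assert (Feq : forall a, F a = step a (fun g _ => F g)).
  { intros a. unfold F. apply (Fix_eq wf (fun _ : K => X) step). intros b f1 f2 Hf.
    assert (E : ext b f1 = ext b f2).
    { apply functional_extensionality. intros g. unfold ext.
      destruct (excluded_middle_informative (lt g b)); auto. }
    unfold step. rewrite E. reflexivity. }
  exists F. intros a. rewrite (Feq a).
  unfold step.
  apply Hcomp with (h := ext a (fun g _ => F g)).
  - intros g Hg. unfold ext. destruct (excluded_middle_informative (lt g a)); [reflexivity|contradiction].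
  - exact (proj2_sig (constructive_indefinite_description _ (Hex a (ext a (fun g _ => F g))))).
Qed.

Lemma lemmaB (K : Type) (Q : K -> Prop) : uncountable K -> regular K -> ~ small K Q ->
  forall f : Pow K -> Pow K -> Prop, (forall b, small K (f b)) ->
  ~ (forall a b : Pow K, sub a b -> sub b Q ->
       exists c, f a c /\ f b c /\ sub a c /\ sub c b).
Proof.
  intros Hu Hr HQ f Hf FN.
  destruct (SO_exists K) as [lt HSO].
  destruct HSO as [tri [irr [tr wf]]] eqn:EHSO.
  destruct (getP K lt Q HSO HQ) as [P [PQ [HP Hinit]]].
  destruct (K_inh K Hu) as [k0 _].
  pose (iK := inhabits k0).
  set (sing := fun b : K => (fun k => k = b) : Pow K).
  set (U := fun a (c : Pow K) => exists g, P g /\ lt g a /\ f (sing g) c).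
  assert (HU : forall a, P a -> small K (U a)).
  { intros a Pa. eapply small_sub;
      [|apply (reg_sub K K (Pow K) (fun g => P g /\ lt g a) (fun g => f (sing g)) Hr (Hinit a Pa))].
    - intros c [g [Pg [Lg Fg]]]. exists g. auto.
    - intros i _. apply Hf. }
  assert (Hbnd : forall b, exists a, P a /\ forall g c, P g -> f (sing g) c -> f b c -> U a c).
  { intros b.
    set (ch := fun c : Pow K => epsilon iK (fun g => P g /\ f (sing g) c)).
    destruct (bound K lt P Hu Hr HSO HP Hinit (fun g => exists c, f b c /\ g = ch c))
      as [a [Pa Ha]].
    { apply small_image. apply Hf. }
    exists a. split; auto. intros g c Pg Fg Fb.
    assert (Hs : P (ch c) /\ f (sing (ch c)) c).
    { apply (epsilon_spec iK (fun g => P g /\ f (sing g) c)). exists g. auto. }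
    exists (ch c). destruct Hs as [Ps Fs]. split; auto. split; auto.
    apply Ha; auto. exists c. auto. }
  set (Bprev := fun (h : K -> K * (Pow K -> K)) a x =>
          exists g, P g /\ lt g a /\ x = fst (h g)).
  set (Dprev := fun (h : K -> K * (Pow K -> K)) a x =>
          exists g, P g /\ lt g a /\ exists c, U g c /\ c (fst (h g)) /\ x = snd (h g) c).
  set (Good := fun a (h : K -> K * (Pow K -> K)) (p : K * (Pow K -> K)) =>
         P a -> P (fst p) /\ ~ Bprev h a (fst p) /\ ~ Dprev h a (fst p) /\
           forall c, U a c -> c (fst p) ->
             c (snd p c) /\ ~ Bprev h a (snd p c) /\ snd p c <> fst p).
  assert (Hcomp : forall a h h' x, (forall g, lt g a -> h g = h' g) -> Good a h x -> Good a h' x).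
  { intros a h h' x Hag Hx Pa.
    assert (EB : forall y, Bprev h' a y -> Bprev h a y).
    { intros y [g [Pg [Lg E]]]. exists g. rewrite Hag; auto. }
    assert (ED : forall y, Dprev h' a y -> Dprev h a y).
    { intros y [g [Pg [Lg [c [Uc [cg E]]]]]]. exists g. rewrite Hag; auto. split; auto. split; auto.
      exists c. auto. }
    destruct (Hx Pa) as [H1 [H2 [H3 H4]]]. split; auto. split; [intros N; apply H2; auto|].
    split; [intros N; apply H3; auto|].
    intros c Uc cx. destruct (H4 c Uc cx) as [G1 [G2 G3]]. split; auto. }
  assert (Hex : forall a h, exists x, Good a h x).
  { intros a h. destruct (classic (P a)) as [Pa|NPa]; [|exists (k0, fun _ => k0); intros Pa; contradiction].
    assert (SB : small K (Bprev h a)).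
    { eapply small_sub; [|apply (small_image K K K (fun g => P g /\ lt g a) (fun g => fst (h g)) (Hinit a Pa))].
      intros x [g [Pg [Lg E]]]. exists g. auto. }
    assert (SD : small K (Dprev h a)).
    { eapply small_sub; [|apply (reg_sub K K K (fun g => P g /\ lt g a)
         (fun g x => exists c, (U g c /\ c (fst (h g))) /\ x = snd (h g) c) Hr (Hinit a Pa))].
      - intros x [g [Pg [Lg [c [Uc [cg E]]]]]]. exists g. split; auto. exists c. auto.
      - intros g [Pg _]. apply small_image. eapply small_sub; [|apply (HU g Pg)].
        intros c [H _]. exact H. }
    set (BadP := fun c b => ~ Bprev h a b /\ c b /\ forall d, c d -> Bprev h a d \/ d = b).
    set (Bad := fun b => exists c, U a c /\ BadP c b).
    assert (SBad : small K Bad).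
    { set (chb := fun c => epsilon iK (BadP c)).
      eapply small_sub; [|apply (small_image K (Pow K) K (U a) chb (HU a Pa))].
      intros b [c [Uc Hb]]. exists c. split; auto.
      assert (Hs : BadP c (chb c)) by (apply epsilon_spec; exists b; exact Hb).
      destruct Hb as [nBb [cb _]]. destruct Hs as [Hs1 [_ Hs3]].
      destruct (Hs3 b cb) as [Bb|E]; [|exact E].
      exfalso. exact (nBb Bb). }
    assert (Sall : small K (fun b => Bprev h a b \/ Dprev h a b \/ Bad b)).
    { apply small_union; auto. apply small_union; auto. }
    assert (Eb : exists b, P b /\ ~ (Bprev h a b \/ Dprev h a b \/ Bad b)).
    { apply NNPP. intros N. apply HP. eapply small_sub; [|exact Sall].
      intros b Pb. apply NNPP. intros Nb. apply N. exists b. auto. }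
    destruct Eb as [b [Pb Nb]].
    exists (b, fun c => epsilon iK (fun d => c d /\ ~ Bprev h a d /\ d <> b)).
    intros _. simpl. split; auto. split; [intros N; apply Nb; auto|].
    split; [intros N; apply Nb; auto|].
    intros c Uc cb. apply (epsilon_spec iK (fun d => c d /\ ~ Bprev h a d /\ d <> b)).
    apply NNPP. intros N. apply Nb. right. right. exists c. split; auto.
    split; [intros Bb; apply Nb; auto|]. split; auto.
    intros d cd. destruct (classic (Bprev h a d)) as [Bd|Bd]; [left; auto|right].
    apply NNPP. intros Nd. apply N. exists d. auto. }
  destruct (trec K (K * (Pow K -> K)) lt (k0, fun _ => k0) wf Good Hcomp Hex) as [F HF].
  set (D := fun d => exists g, P g /\ exists c, U g c /\ c (fst (F g)) /\ d = snd (F g) c).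
  set (b := fun k => Q k /\ ~ D k).
  destruct (Hbnd b) as [a [Pa Ha]].
  destruct (HF a Pa) as [Pbeta [nB [nD Hc]]].
  set (beta := fst (F a)) in *.
  assert (bb : b beta).
  { split; [apply PQ; auto|]. intros [g [Pg [c [Uc [cg E]]]]].
    destruct (tri g a) as [Eg|[L|L]].
    - subst g. destruct (Hc c Uc cg) as [_ [_ Ne]]. apply Ne. symmetry. exact E.
    - apply nD. exists g. split; auto. split; auto. exists c. auto.
    - destruct (HF g Pg) as [_ [_ [_ Hcg]]]. destruct (Hcg c Uc cg) as [_ [NB _]].
      apply NB. rewrite <- E. exists a. auto. }
  destruct (FN (sing beta) b) as [c [F1 [F2 [S1 S2]]]].
  { intros k E. unfold sing in E. subst k. exact bb. }
  { intros k [Qk _]. exact Qk. }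
  assert (Uc : U a c) by (apply (Ha beta); auto).
  assert (cb : c beta) by (apply S1; reflexivity).
  destruct (Hc c Uc cb) as [cd _].
  destruct (S2 _ cd) as [_ ND]. apply ND. exists a. split; auto. exists c. auto.
Qed.

Lemma partition (K : Type) : uncountable K -> regular K ->
  exists (P : K -> Prop) (A : K -> Pow K), ~ small K P /\
    (forall x, P x -> ~ small K (A x)) /\
    (forall x x' y, P x -> P x' -> A x y -> A x' y -> x = x').
Proof.
  intros Hu Hr.
  destruct (SO_exists K) as [lt HSO].
  destruct HSO as [tri [irr [tr wf]]] eqn:EHSO.
  destruct (getP K lt (fun _ => True) HSO (notsmall_K K)) as [P [_ [HP Hinit]]].
  set (le' := fun x a => lt x a \/ x = a).
  assert (Hseg : forall a, P a -> small K (fun x => P x /\ le' x a)).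
  { intros a Pa. eapply small_sub; [|apply (small_union K K _ _ Hu Hr (Hinit a Pa) (small_sing K K a Hu))].
    intros x [Px [L|E]]; [left; auto|right; auto]. }
  set (Used := fun (h : K -> K -> K) a y =>
        exists g, P g /\ lt g a /\ exists x, (P x /\ le' x g) /\ y = h g x).
  set (Good := fun a (h : K -> K -> K) (p : K -> K) =>
        P a -> injective p /\ forall k, ~ Used h a (p k)).
  assert (Hcomp : forall a h h' x, (forall g, lt g a -> h g = h' g) -> Good a h x -> Good a h' x).
  { intros a h h' x Hag Hx Pa. destruct (Hx Pa) as [H1 H2]. split; auto.
    intros k [g [Pg [Lg [y [Hy E]]]]]. apply (H2 k). exists g. split; auto. split; auto.
    exists y. rewrite Hag; auto. }
  assert (Hex : forall a h, exists x, Good a h x).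
  { intros a h. destruct (classic (P a)) as [Pa|NPa];
      [|exists (fun k => k); intros Pa; contradiction].
    assert (SU : small K (Used h a)).
    { eapply small_sub; [|apply (reg_sub K K K (fun g => P g /\ lt g a)
          (fun g y => exists x, (P x /\ le' x g) /\ y = h g x) Hr (Hinit a Pa))].
      - intros y [g [Pg [Lg H]]]. exists g. auto.
      - intros g [Pg _]. apply small_image. apply Hseg; auto. }
    assert (NF : ~ small K (fun y => ~ Used h a y)).
    { intros Sf. apply (notsmall_K K). eapply small_sub; [|apply (small_union K K _ _ Hu Hr SU Sf)].
      intros y _. apply classic. }
    destruct (not_small_ex K K _ NF) as [p [Hp Hpk]].
    exists p. intros _. auto. }
  destruct (trec K (K -> K) lt (fun k => k) wf Good Hcomp Hex) as [F HF].
  assert (dist : forall a a' x x', P a -> P a' -> P x -> P x' -> le' x a -> le' x' a' ->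
            F a x = F a' x' -> a = a' /\ x = x').
  { intros a a' x x' Pa Pa' Px Px' La La' E.
    destruct (tri a a') as [Ea|[L|L]].
    - subst a'. split; auto. destruct (HF a Pa) as [Hi _]. apply Hi. exact E.
    - exfalso. destruct (HF a' Pa') as [_ Hn]. apply (Hn x'). rewrite <- E.
      exists a. split; auto. split; auto. exists x. auto.
    - exfalso. destruct (HF a Pa) as [_ Hn]. apply (Hn x). rewrite E.
      exists a'. split; auto. split; auto. exists x'. auto. }
  exists P, (fun x y => exists a, P a /\ le' x a /\ y = F a x).
  split; [exact HP|split].
  - intros x Px Sx.
    assert (NT : ~ small K (fun a => P a /\ le' x a)).
    { intros ST. apply HP. eapply small_sub; [|apply (small_union K K _ _ Hu Hr (Hinit x Px) ST)].
      intros a Pa. destruct (tri a x) as [E|[L|L]].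
      - right. split; auto. right. auto.
      - left. auto.
      - right. split; auto. left. auto. }
    destruct (not_small_ex K K _ NT) as [h [Hh Hhk]].
    apply Sx. exists (fun k => F (h k) x). split.
    + intros k1 k2 E. apply Hh. destruct (Hhk k1) as [P1 L1]. destruct (Hhk k2) as [P2 L2].
      destruct (dist _ _ _ _ P1 P2 Px Px L1 L2 E) as [E1 _]. exact E1.
    + intros k. exists (h k). destruct (Hhk k). auto.
  - intros x x' y Px Px' [a [Pa [La E]]] [a' [Pa' [La' E']]].
    subst y. destruct (dist _ _ _ _ Pa Pa' Px Px' La La' E') as [_ Ex]. exact Ex.
Qed.

Theorem proposition5p3 (K : Type) :
  uncountable K -> regular K ->
  ~ kFN K (PowMod K) (@PowMod_le K) /\ ~ kFN K (Pow K) (@Pow_le K).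
Proof.
  intros Hu Hr. split.
  - intros [g [Hg FN]].
    destruct (partition K Hu Hr) as [P [A [HP [HA Hdis]]]].
    set (cls := fun a : Pow K => exist (fun C : Pow K -> Prop => exists a0 : Pow K,
              forall b, C b <-> eq_mod a0 b) (fun z => eq_mod a z)
              (ex_intro _ a (fun b => conj (fun H => H) (fun H => H))) : PowMod K).
    set (E := fun x : Pow K => (fun y => exists xi, x xi /\ P xi /\ A xi y) : Pow K).
    set (r := fun C : PowMod K => (fun xi => P xi /\ exists a, proj1_sig C a /\
                 small K (setdiff (A xi) a)) : Pow K).
    assert (Hsd : forall x y : Pow K, sub x y -> small K (setdiff x y)).
    { intros x y Hxy. eapply small_sub; [|apply (small_empty K K Hu)].
      intros k [H1 H2]. apply H2. apply Hxy. exact H1. }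
    apply (lemmaB K P Hu Hr HP (fun x z => exists c, g (cls (E x)) c /\ z = r c)).
    { intros x. apply small_image. apply Hg. }
    intros a b Hab HbP.
    assert (Hle : PowMod_le (cls (E a)) (cls (E b))).
    { exists (E a), (E b). simpl. split; [split; apply Hsd; intros k H; exact H|].
      split; [split; apply Hsd; intros k H; exact H|].
      apply Hsd. intros y [xi [ax [Px Ay]]]. exists xi. auto. }
    destruct (FN _ _ Hle) as [c [G1 [G2 [L1 L2]]]].
    exists (r c). split; [exists c; auto|]. split; [exists c; auto|]. split.
    + intros xi axi. split; [apply HbP; apply Hab; auto|].
      destruct L1 as [a1 [b1 [H1 [cb1 S3]]]]. simpl in H1. destruct H1 as [S1 S2].
      exists b1. split; auto.
      eapply small_sub; [|apply (small_union K K _ _ Hu Hr S1 S3)].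
      intros y [Ay nb]. destruct (classic (a1 y)) as [ay|nay].
      * right. split; auto.
      * left. split; [|exact nay]. exists xi. split; [exact axi|]. split; [apply HbP; apply Hab; exact axi|exact Ay].
    + intros xi [Pxi [a2 [ca2 S2]]].
      destruct L2 as [a3 [b3 [ca3 [H2 T3]]]]. simpl in H2. destruct H2 as [T1 T2].
      destruct (proj2_sig c) as [a0 Ha0].
      destruct (proj1 (Ha0 a2) ca2) as [U1 U2].
      destruct (proj1 (Ha0 a3) ca3) as [V1 V2].
      assert (SS : small K (setdiff (A xi) (E b))).
      { eapply small_sub; [|apply (small_union K K _ _ Hu Hr S2
            (small_union K K _ _ Hu Hr U2 (small_union K K _ _ Hu Hr V1
               (small_union K K _ _ Hu Hr T3 T2))))].
        intros y [Ay nE].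
        destruct (classic (a2 y)) as [y2|y2]; [|left; split; auto]. right.
        destruct (classic (a0 y)) as [y0|y0]; [|left; split; auto]. right.
        destruct (classic (a3 y)) as [y3|y3]; [|left; split; auto]. right.
        destruct (classic (b3 y)) as [y4|y4]; [|left; split; auto]. right.
        split; auto. }
      apply NNPP. intros nb. apply (HA xi Pxi).
      eapply small_sub; [|exact SS]. intros y Ay. split; auto.
      intros [xi' [bxi' [Pxi' Ay']]]. apply nb.
      rewrite (Hdis xi xi' y Pxi Pxi' Ay Ay'). exact bxi'.
  - intros [f [Hf FN]].
    apply (lemmaB K (fun _ => True) Hu Hr (notsmall_K K) f Hf).
    intros a b Hab _. exact (FN a b Hab).
Qed.
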